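(* Let $X$ and $Y$ be topological spaces. If $C(X)$ has the countable sup property and $Y$ is separable, then $C(X\times Y)$ has the countable sup property.
   Context: $C(Z)$ is the vector lattice of real-valued continuous functions on $Z$ with the pointwise order; $X\times Y$ has the product topology. A vector lattice has the countable sup property if every nonempty subset possessing a supremum contains a countable subset with the same supremum. *)

(* Defs.v *)
From HB Require Import structures.
From mathcomp Require Import all_boot all_order all_algebra.
From mathcomp Require Import all_classical all_reals all_analysis.
Set Implicit Arguments. Unset Strict Implicit. Unset Printing Implicit Defensive.
Import Order.TTheory GRing.Theory Num.Theory numFieldNormedType.Exports.
Local Open Scope classical_set_scope.
Local Open Scope ring_scope.

Definition Cspace (R : realType) (Z : topologicalType) : set (Z -> R) :=
  [set f : Z -> R | continuous f].

Definition is_sup_in_C (R : realType) (Z : topologicalType)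
    (S : set (Z -> R)) (g : Z -> R) : Prop :=
  [/\ continuous g,
      (forall f, S f -> forall z, f z <= g z) &
      (forall h : Z -> R, continuous h ->
         (forall f, S f -> forall z, f z <= h z) -> forall z, g z <= h z)].

Definition countable_sup_property (R : realType) (Z : topologicalType) : Prop :=
  forall (S : set (Z -> R)), S `<=` @Cspace R Z -> S !=set0 ->
  forall g : Z -> R, @is_sup_in_C R Z S g ->
  exists S' : set (Z -> R), [/\ S' `<=` S, countable S' & @is_sup_in_C R Z S' g].

Definition separable_space (Y : topologicalType) : Prop :=
  exists D : set Y, countable D /\ closure D = setT.

(* Main.v *)
Require Import Defs.
From mathcomp Require Import all_boot all_order all_algebra.
From mathcomp Require Import all_classical all_reals all_analysis.
From mathcomp Require Import lra.
Set Implicit Arguments. Unset Strict Implicit. Unset Printing Implicit Defensive.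
Import Order.TTheory GRing.Theory Num.Theory numFieldNormedType.Exports.
Local Open Scope classical_set_scope.
Local Open Scope ring_scope.

Definition bumpf (R : realType) (Z : topologicalType) (k : Z -> R) (z0 : Z) : Z -> R :=
  fun x => Num.min 1 (Num.max (k x) 0 / k z0).

Lemma bump_cont (R : realType) (Z : topologicalType) (k : Z -> R) z0 :
  continuous k -> continuous (bumpf k z0).
Proof.
move=> kc x.
have -> : bumpf k z0 = (fun=> (1:R)) \min ((k \max (fun=> 0)) \* (fun=> (k z0)^-1)).
  by apply: funext => y /=; rewrite /bumpf.
apply: continuous_min; first exact: cvg_cst.
apply: continuousM; last exact: cvg_cst.
by apply: continuous_max; [exact: kc | exact: cvg_cst].
Qed.

Lemma bump_le1 (R : realType) (Z : topologicalType) (k : Z -> R) z0 x :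
  bumpf k z0 x <= 1.
Proof. by rewrite /bumpf ge_min lexx. Qed.

Lemma bump_z0 (R : realType) (Z : topologicalType) (k : Z -> R) z0 :
  0 < k z0 -> bumpf k z0 z0 = 1.
Proof.
move=> kp; rewrite /bumpf max_l ?ltW // divff ?gt_eqF //.
by rewrite minxx.
Qed.

Lemma bump_pos (R : realType) (Z : topologicalType) (k : Z -> R) z0 x :
  0 < k z0 -> 0 < bumpf k z0 x -> 0 < k x.
Proof.
move=> kp; rewrite /bumpf lt_min => /andP[_].
rewrite pmulr_lgt0 ?invr_gt0 // lt_max ltxx orbF //.
Qed.

Lemma bump_zero (R : realType) (Z : topologicalType) (k : Z -> R) z0 x :
  k x <= 0 -> bumpf k z0 x = 0.
Proof.
move=> kn; rewrite /bumpf max_r // mul0r.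
by rewrite min_r // ler01.
Qed.

Lemma sup_approx (R : realType) (Z : topologicalType) (S : set (Z -> R)) g
  (k : Z -> R) z0 (e : R) :
  is_sup_in_C S g -> continuous k -> 0 < k z0 -> 0 < e ->
  exists z f, [/\ 0 < k z, S f & g z - e < f z].
Proof.
move=> [gc gub gl] kc kp ep.
apply: contrapT => /forallNP H.
have H' : forall z f, 0 < k z -> S f -> f z <= g z - e.
  move=> z f kz Sf; rewrite leNgt; apply/negP => lt.
  by apply: (H z); exists f; split.
have hc : continuous (fun z => g z - e * bumpf k z0 z).
  move=> x; apply: cvgB; first exact: gc.
  apply: cvgM; first exact: cvg_cst.
  exact: bump_cont.
have := gl _ hc _ z0.
rewrite bump_z0 // mulr1 => /(_ _)/wrap[]; last first.
  by move=> H0; lra.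
move=> f Sf z; have [kz|kz] := ltP 0 (k z).
    apply: (le_trans (H' z f kz Sf)); rewrite lerD2l lerN2.
    by have := bump_le1 k z0 z => ?; nra.
  by rewrite bump_zero // mulr0 subr0; apply: gub.
Qed.

Definition Ffam (R : realType) (X : topologicalType) (Q : set (X -> R)) : set (X -> R) :=
  [set phi : X -> R | [/\ continuous phi, (forall x, phi x <= 1) &
    ((exists e, Q e /\ forall x, 0 < phi x -> 0 < e x) \/
     (forall x, (exists e, Q e /\ 0 < e x) -> phi x = 0))]].

Lemma sup_one (R : realType) (X : topologicalType) (Q : set (X -> R)) :
  (forall e, Q e -> continuous e) -> is_sup_in_C (Ffam Q) (fun _ => 1).
Proof.
move=> Qc; split.
- move=> x; exact: cvg_cst.
- by move=> f [].
move=> h hc hub z; rewrite leNgt; apply/negP => hz.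
pose w := fun x => 1 - h x - (1 - h z) / 2.
have wc : continuous w.
  move=> x; apply: cvgB; last exact: cvg_cst.
  apply: cvgB; [exact: cvg_cst | exact: hc].
have wz : 0 < w z by rewrite /w; lra.
have [[x [e [Qe ex wx]]]|N] := pselect (exists x e, [/\ Q e, 0 < e x & 0 < w x]).
  have : Ffam Q (bumpf e x).
    split; [exact: bump_cont (Qc _ Qe) | move=> y; exact: bump_le1 |].
    by left; exists e; split => // y; apply: bump_pos.
  move=> /hub /(_ x); rewrite bump_z0 //; move: wx; rewrite /w; lra.
have : Ffam Q (bumpf w z).
  split; [exact: bump_cont wc | move=> y; exact: bump_le1 |].
  right => y [e [Qe ey]]; apply: bump_zero; rewrite leNgt; apply/negP => wy.
  by apply: N; exists y, e.
by move=> /hub /(_ z); rewrite bump_z0 //; lra.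
Qed.

Lemma slice1 (R : realType) (X Y : topologicalType) (f : X * Y -> R) y :
  continuous f -> continuous (fun x => f (x, y)).
Proof.
move=> fc x; apply: (@continuous_comp _ _ _ (fun x => (x, y)) f); last exact: fc.
by apply: cvg_pair => /=; [exact: cvg_id | exact: cvg_cst].
Qed.

Lemma slice2 (R : realType) (X Y : topologicalType) (f : X * Y -> R) x :
  continuous f -> continuous (fun y => f (x, y)).
Proof.
move=> fc y; apply: (@continuous_comp _ _ _ (fun y => (x, y)) f); last exact: fc.
by apply: cvg_pair => /=; [exact: cvg_cst | exact: cvg_id].
Qed.

Lemma pos_nbhs (R : realType) (T : topologicalType) (a : T -> R) y :
  continuous a -> 0 < a y -> nbhs y [set y' | 0 < a y'].
Proof. by move=> ac ay; exact: (ac _ _ (lt_nbhsr ay)). Qed.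

Lemma small_inv (R : realType) (d : R) : 0 < d -> exists n : nat, n.+1%:R^-1 < d.
Proof.
move=> dp; exists (Num.bound d^-1).
have dip : 0 < d^-1 by rewrite invr_gt0.
have H := @archi_boundP R d^-1 (ltW dip).
rewrite -[d]invrK ltf_pV2 ?posrE ?invr_gt0 //.
by rewrite !invrK; apply: (lt_trans H); rewrite ltr_nat.
Qed.

Lemma fin_arith (R : realType) (g h c a dl : R) :
  0 < g - h - dl / 2 -> a < dl / 2 -> 0 < c - g + a -> c <= h -> False.
Proof. move=> *; lra. Qed.

Theorem corollary6p3 (R : realType) (X Y : topologicalType) :
  countable_sup_property R X -> separable_space Y ->
  countable_sup_property R (X * Y)%type.
Proof.
move=> hX [D [Dc Dd]] S SC [g0 Sg0] g gsup.
have [gc gub gl] := gsup.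
pose eps (n : nat) : R := n.+1%:R^-1.
have epsp n : 0 < eps n by rewrite /eps invr_gt0 ltr0n.
pose Q (p : Y * nat) := [set e : X -> R | exists f, S f /\
   e = (fun x => f (x, p.1) - g (x, p.1) + eps p.2)].
have Qc p e : Q p e -> continuous e.
  move=> [f [Sf ->]] x; apply: cvgD; last exact: cvg_cst.
  by apply: cvgB; apply: slice1; [exact: SC | exact: gc].
have hF : forall p : Y * nat, exists F' : set (X -> R),
    [/\ F' `<=` Ffam (Q p), countable F' & is_sup_in_C F' (fun _ => 1)].
  move=> p; apply: hX (sup_one (@Qc p)).
  - by move=> phi [].
  - exists (fun _ => 0); split; [move=> ?; exact: cvg_cst | move=> ?; exact: ler01 | by right].
have [F' hF'] := choice hF.
pose P (p : Y * nat) (phi : X -> R) (f : X * Y -> R) :=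
  S f /\ forall x, 0 < phi x -> 0 < f (x, p.1) - g (x, p.1) + eps p.2.
have hch : forall q : (Y * nat) * (X -> R), exists f,
    (exists f', P q.1 q.2 f') -> P q.1 q.2 f.
  move=> q; have [[f' Hf']|N] := pselect (exists f', P q.1 q.2 f').
    by exists f'.
  by exists g0 => H; exfalso; apply: N.
have [ch Hch] := choice hch.
pose dom := [set q : (Y * nat) * (X -> R) | [/\ D q.1.1, F' q.1 q.2 &
   exists f, P q.1 q.2 f]].
exists (ch @` dom); split.
- by move=> _ [q [_ _ Hex] <-]; exact: (Hch q Hex).1.
- apply: sub_countable (card_image_le _ _) _.
  apply: (@sub_countable _ _ _ (\bigcup_(p in D `*` setT) ((fun phi => (p, phi)) @` F' p))).
    apply: subset_card_le => q [Dq Fq _]; exists q.1 => //.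
    by exists q.2 => //; case: q {Dq Fq} => [[]].
  apply: bigcup_countable; first exact: countableX Dc (countableP _).
  move=> p _; apply: sub_countable (card_image_le _ _) _.
  by have [] := hF' p.
split => //.
- by move=> _ [q [_ _ Hex] <-]; apply: gub; exact: (Hch q Hex).1.
move=> h hc hub z0; rewrite leNgt; apply/negP => hz.
pose dl := g z0 - h z0.
have dlp : 0 < dl by rewrite /dl subr_gt0.
have [n epsn] := small_inv (divr_gt0 dlp (ltr0n R 2)).
pose k := fun z => g z - h z - dl / 2.
have kc : continuous k.
  move=> z; apply: cvgB; last exact: cvg_cst.
  by apply: cvgB; [exact: gc | exact: hc].
have kz0 : 0 < k z0 by rewrite /k -/dl; lra.
have [[x y] [f [kxy Sf fxy]]] := sup_approx gsup kc kz0 (epsp n).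
have nb : nbhs y ([set y' | 0 < k (x, y')] `&`
                  [set y' | 0 < f (x, y') - g (x, y') + eps n]).
  apply: filterI.
    by apply: (pos_nbhs (a := fun y0 => k (x, y0))) => //; exact: slice2 kc.
  apply: (pos_nbhs (a := fun y' => f (x, y') - g (x, y') + eps n)) => /=; last lra.
  move=> y'; apply: cvgD; last exact: cvg_cst.
  by apply: cvgB; apply: slice2; [exact: SC | exact: gc].
have : closure D y by rewrite Dd.
move=> /(_ _ nb) [d [Dd' [kd fd]]].
have [F'sub _ supF] := hF' (d, n).
pose w := fun x' => Num.min (k (x', d)) (f (x', d) - g (x', d) + eps n).
have wc : continuous w.
  move=> x'; apply: (@continuous_min _ _ (fun x' => k (x', d))
     (fun x' => f (x', d) - g (x', d) + eps n)).
    exact: (slice1 kc).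
  apply: cvgD; last exact: cvg_cst.
  by apply: cvgB; apply: slice1; [exact: SC | exact: gc].
have wx : 0 < w x by rewrite /w lt_min kd fd.
have h2 : (0:R) < 2^-1 by rewrite invr_gt0 ltr0n.
have [x' [phi [wx' Fphi phix']]] := sup_approx supF wc wx h2.
have [_ _ [[e [[f1 [Sf1 ->]] He]]|H0]] := F'sub _ Fphi; last first.
  have : phi x' = 0.
    apply: H0; exists (fun x => f (x, (d, n).1) - g (x, (d, n).1) + eps (d, n).2).
    split; first by exists f.
    by move: wx'; rewrite /w lt_min => /andP[].
  by move=> ph0; move: phix'; rewrite ph0; lra.
have Hex : exists f', P ((d, n), phi).1 ((d, n), phi).2 f'.
  by exists f1; split.
have [_ Hc] := Hch _ Hex.
have := hub (ch ((d, n), phi)) (ex_intro2 _ _ ((d, n), phi) (And3 Dd' Fphi Hex) erefl) (x', d).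
have phpos : 0 < phi x' by lra.
have := Hc x' phpos.
move: wx'; rewrite /w lt_min => /andP[kx' _].
move: kx' epsn; rewrite /k /eps /=.
by move=> A B C E; exact: (fin_arith A B C E).
Qed.
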